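(* There exist constants $C^+,C^->0$ such that for every irrational real number $x$: (a) $B(x)<\infty$ if and only if $B_0(x)+B_0(-x)<\infty$, and in that case $$\bigl|B(x)-2B_0^+(x)\bigr|\le C^+,\qquad\text{where } B_0^+(x)=\tfrac12\bigl(B_0(x)+B_0(-x)\bigr);$$ (b) if $B_0(x)$ and $B_0(-x)$ are both finite, then the series defining $W(x)$ converges and $$\bigl|W(x)-2B_0^-(x)\bigr|\le C^-,\qquad\text{where } B_0^-(x)=\tfrac12\bigl(B_0(x)-B_0(-x)\bigr).$$
   Context: For real $x$ let $\{x\}=x-\lfloor x\rfloor$. The Gauss map is $A(y)=\{1/y\}$ and the by-excess map is $A_0(y)=\lfloor 1/y+1\rfloor-1/y$, for $y\in(0,1)$; for irrational $y\in(0,1)$ both $A(y)$ and $A_0(y)$ are irrational numbers in $(0,1)$ and $A_0(y)=1-A(y)$. Iterates are written $A^j$, $A_0^j$, with $A^0=A_0^0=\mathrm{id}$, and empty products equal $1$. For irrational $x$ put $y=\{x\}$ and define $$B(x)=\sum_{j\ge0}\Bigl(\prod_{k=0}^{j-1}A^k(y)\Bigr)\log\frac{1}{A^j(y)}\in[0,+\infty]\quad(\text{Brjuno function}),$$ $$B_0(x)=\sum_{j\ge0}\Bigl(\prod_{k=0}^{j-1}A_0^k(y)\Bigr)\log\frac{1}{A_0^j(y)}\in[0,+\infty]\quad(\text{semi-Brjuno function}),$$ and the Wilton series $W(x)=\sum_{j\ge0}(-1)^j\Bigl(\prod_{k=0}^{j-1}A^k(y)\Bigr)\log\frac{1}{A^j(y)}$;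 we say $W(x)$ converges if its partial sums converge, and then $W(x)$ denotes the limit. All three are $1$-periodic in $x$ by construction (note that $B_0$ is in general not even). The $j=0$ term of each series is $-\log y$. *)

(* Defs.v *)
From Stdlib Require Import Reals Lra.
From Coquelicot Require Import Coquelicot.
Open Scope R_scope.

Definition frac (x : R) : R := x - IZR (Int_part x).

Definition gaussA (y : R) : R := frac (/ y).

Definition gaussA0 (y : R) : R := IZR (Int_part (/ y + 1)) - / y.

Fixpoint iterR (T : R -> R) (j : nat) (y : R) : R :=
  match j with O => y | S j' => T (iterR T j' y) end.

Fixpoint prodIter (T : R -> R) (j : nat) (y : R) : R :=
  match j with O => 1 | S j' => prodIter T j' y * iterR T j' y end.

Definition brjuno_term (T : R -> R) (y : R) (j : nat) : R :=
  prodIter T j y * ln (/ iterR T j y).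

Definition irrational (x : R) : Prop :=
  forall (p q : Z), q <> 0%Z -> x <> IZR p / IZR q.

Definition B_term (x : R) (j : nat) : R := brjuno_term gaussA (frac x) j.
Definition B0_term (x : R) (j : nat) : R := brjuno_term gaussA0 (frac x) j.
Definition W_term (x : R) (j : nat) : R := (-1) ^ j * brjuno_term gaussA (frac x) j.

Definition B_finite (x : R) : Prop := ex_series (B_term x).
Definition B0_finite (x : R) : Prop := ex_series (B0_term x).
Definition W_converges (x : R) : Prop := ex_series (W_term x).
Definition Bval (x : R) : R := Series (B_term x).
Definition B0val (x : R) : R := Series (B0_term x).
Definition Wval (x : R) : R := Series (W_term x).

Definition B0plus (x : R) : R := (B0val x + B0val (- x)) / 2.
Definition B0minus (x : R) : R := (B0val x - B0val (- x)) / 2.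

(* Main.v *)
Require Import Defs.
From Stdlib Require Import Reals Lra Lia ZArith.
From Coquelicot Require Import Coquelicot.
Open Scope R_scope.

Lemma Int_part_unique (n : Z) (z : R) : IZR n <= z < IZR n + 1 -> Int_part z = n.
Proof.
  intros [H1 H2]. unfold Int_part.
  assert (n + 1 = up z)%Z as <-.
  { apply tech_up; rewrite plus_IZR; lra. }
  lia.
Qed.

Lemma frac_bounds z : 0 <= frac z < 1.
Proof. unfold frac; destruct (base_Int_part z); lra. Qed.

Lemma Int_part_plus z k : Int_part (z + IZR k) = (Int_part z + k)%Z.
Proof.
  apply Int_part_unique. rewrite plus_IZR. destruct (base_Int_part z). lra.
Qed.

Lemma frac_plus z k : frac (z + IZR k) = frac z.
Proof. unfold frac. rewrite Int_part_plus, plus_IZR. ring. Qed.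

Lemma frac_eq z n : IZR n <= z < IZR n + 1 -> frac z = z - IZR n.
Proof. intros H. unfold frac. rewrite (Int_part_unique n z H). ring. Qed.

Lemma A0_eq y : gaussA0 y = 1 - gaussA y.
Proof.
  unfold gaussA0, gaussA, frac.
  replace 1 with (IZR 1) at 1 by reflexivity.
  rewrite (Int_part_plus (/y) 1), plus_IZR. simpl. ring.
Qed.

Definition irr (z : R) : Prop := forall p q : Z, q <> 0%Z -> z <> IZR p / IZR q.

Lemma irr_neq0 z : irr z -> z <> 0.
Proof. intros H E. apply (H 0%Z 1%Z); [lia|]. rewrite E. simpl. field. Qed.

Lemma irr_inv z : irr z -> irr (/ z).
Proof.
  intros H p q Hq E. assert (z <> 0) by (apply irr_neq0; auto).
  destruct (Z.eq_dec p 0) as [->|Hp].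
  - apply (Rinv_neq_0_compat z H0). rewrite E. simpl. unfold Rdiv. ring.
  - apply (H q p Hp). rewrite <- (Rinv_inv z), E. field. split; apply not_0_IZR; auto.
Qed.

Lemma irr_shift z k : irr z -> irr (z - IZR k).
Proof.
  intros H p q Hq E. apply (H (p + k * q)%Z q Hq).
  rewrite plus_IZR, mult_IZR. apply (f_equal (fun w => w + IZR k)) in E.
  replace (z - IZR k + IZR k) with z in E by ring. rewrite E. field. apply not_0_IZR; auto.
Qed.

Lemma irr_opp1 z : irr z -> irr (1 - z).
Proof.
  intros H p q Hq E. apply (H (q - p)%Z q Hq).
  rewrite minus_IZR. replace z with (1 - (1 - z)) by ring. rewrite E. field. apply not_0_IZR; auto.
Qed.

Lemma irr_opp z : irr z -> irr (- z).
Proof.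
  intros H p q Hq E. apply (H (- p)%Z q Hq).
  rewrite opp_IZR. replace z with (- - z) by ring. rewrite E. field. apply not_0_IZR; auto.
Qed.

Definition good (z : R) : Prop := 0 < z < 1 /\ irr z.

Lemma irr_frac z : irr z -> irr (frac z).
Proof. intros H; unfold frac; apply irr_shift; auto. Qed.

Lemma good_frac z : irr z -> good (frac z).
Proof.
  intros H. split; [|apply irr_frac; auto].
  destruct (frac_bounds z). split; auto.
  destruct H0; auto. exfalso. apply (irr_neq0 _ (irr_frac _ H)). auto.
Qed.

Lemma good_A z : good z -> good (gaussA z).
Proof. intros [_ H]. apply good_frac. apply irr_inv; auto. Qed.

Lemma good_1m z : good z -> good (1 - z).
Proof. intros [[H1 H2] H]. split; [lra|]. apply irr_opp1; auto. Qed.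

Lemma good_A0 z : good z -> good (gaussA0 z).
Proof. intros H. rewrite A0_eq. apply good_1m, good_A; auto. Qed.

Lemma irrational_irr x : irrational x -> irr x.
Proof. intros H p q Hq. apply H; auto. Qed.

Lemma frac_opp x : irr x -> frac (- x) = 1 - frac x.
Proof.
  intros H. unfold frac.
  assert (Int_part (- x) = (- Int_part x - 1)%Z) as ->.
  { apply Int_part_unique. rewrite minus_IZR, opp_IZR. destruct (base_Int_part x).
    assert (IZR (Int_part x) <> x).
    { intro E. apply (H (Int_part x) 1%Z); [lia|]. simpl. rewrite E. field. }
    lra. }
  rewrite minus_IZR, opp_IZR. ring.
Qed.

Lemma good_mul_A z : good z -> z * gaussA z <= 1/2.
Proof.
  intros [[H1 H2] _]. unfold gaussA, frac.
  destruct (base_Int_part (/ z)) as [Ha Hb].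
  assert (1 < / z). { rewrite <- Rinv_1. apply Rinv_lt_contravar; lra. }
  assert (1 <= IZR (Int_part (/z))).
  { assert (0 < Int_part (/ z))%Z. { apply lt_IZR. simpl. lra. }
    apply IZR_le. lia. }
  replace (z * (/ z - IZR (Int_part (/ z)))) with (1 - z * IZR (Int_part (/ z))) by (field; lra).
  destruct (Rle_lt_dec (1/2) z).
  - assert (0 <= z * (IZR (Int_part (/ z)) - 1)) by (apply Rmult_le_pos; lra). nra.
  - assert (/ z - IZR (Int_part (/ z)) < 1) by lra.
    replace (1 - z * IZR (Int_part (/ z))) with (z * (/ z - IZR (Int_part (/ z)))) by (field; lra).
    nra.
Qed.

Fixpoint wsum (T g : R -> R) (sg y : R) (n : nat) : R :=
  match n with
  | O => 0
  | S n' => wsum T g sg y n' + sg ^ n' * prodIter T n' y * g (iterR T n' y)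
  end.

Lemma iter_S' T j y : iterR T (S j) y = iterR T j (T y).
Proof. induction j; simpl; auto. simpl in IHj. rewrite IHj. auto. Qed.

Lemma prod_S' T j y : prodIter T (S j) y = y * prodIter T j (T y).
Proof.
  induction j; simpl. ring.
  simpl in IHj. rewrite IHj. rewrite <- iter_S'. simpl. ring.
Qed.

Lemma wsum_shift T g sg y n :
  wsum T g sg y (S n) = g y + sg * y * wsum T g sg (T y) n.
Proof.
  induction n.
  - simpl. ring.
  - change (wsum T g sg y (S (S n))) with
      (wsum T g sg y (S n) + sg ^ (S n) * prodIter T (S n) y * g (iterR T (S n) y)).
    rewrite IHn, prod_S', iter_S'. simpl. ring.
Qed.

Lemma wsum_split T g y a n :
  wsum T g 1 y (a + n) = wsum T g 1 y a + prodIter T a y * wsum T g 1 (iterR T a y) n.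
Proof.
  revert y. induction a; intros y.
  - simpl. ring.
  - rewrite Nat.add_succ_l, !wsum_shift, IHa, prod_S', iter_S'. ring.
Qed.

Definition lninv (z : R) : R := ln (/ z).

Lemma ln_le_m1 z : 0 < z -> ln z <= z - 1.
Proof.
  intros H. rewrite <- (ln_exp (z - 1)). apply ln_le; auto.
  pose proof (exp_ineq1_le (z - 1)). lra.
Qed.

Lemma ln_nonneg z : 1 <= z -> 0 <= ln z.
Proof. intros H. rewrite <- ln_1. apply ln_le; lra. Qed.

Definition na (t : R) : nat := Z.to_nat (Int_part (/ t)).

Lemma na_facts t : good t ->
  (1 <= na t)%nat /\ INR (na t) = IZR (Int_part (/ t)) /\ / t - INR (na t) = gaussA t.
Proof.
  intros [[H1 H2] _].
  destruct (base_Int_part (/ t)) as [Ha Hb].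
  assert (1 < / t). { rewrite <- Rinv_1. apply Rinv_lt_contravar; lra. }
  assert (0 < Int_part (/ t))%Z. { apply lt_IZR. simpl. lra. }
  assert (HN : INR (na t) = IZR (Int_part (/ t))).
  { unfold na. rewrite INR_IZR_INZ. rewrite Z2Nat.id by lia. auto. }
  split; [|split; auto].
  - unfold na. lia.
  - unfold gaussA, frac. rewrite HN. ring.
Qed.

Lemma run t : good t -> forall m, (m < na t)%nat ->
  iterR gaussA0 m (1 - t) = 1 - / (/ t - INR m) /\
  prodIter gaussA0 m (1 - t) = (/ t - INR m) / / t.
Proof.
  intros Ht. destruct (na_facts t Ht) as [Ha [Hb Hc]].
  pose proof (good_A t Ht) as [[Hs1 Hs2] _].
  destruct Ht as [[H1 H2] _].
  induction m; intros Hm.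
  - simpl. split; field; lra.
  - destruct (IHm ltac:(lia)) as [E1 E2].
    assert (INR (S m) + 1 <= INR (na t)).
    { rewrite <- S_INR. apply le_INR. lia. }
    rewrite S_INR in *.
    set (d := / t - INR m) in *.
    assert (2 < d) by (unfold d; lra).
    assert (Hd : / t - (INR m + 1) = d - 1) by (unfold d; ring). rewrite Hd.
    clearbody d.
    simpl. rewrite E1, E2. split.
    + rewrite A0_eq. unfold gaussA.
      rewrite (frac_eq _ 1).
      * simpl. field. split; lra.
      * replace (/ (1 - / d)) with (1 + / (d - 1)) by (field; split; lra).
        assert (0 < / (d - 1) < 1).
        { split. apply Rinv_0_lt_compat; lra.
          rewrite <- Rinv_1. apply Rinv_lt_contravar; lra. }
        simpl. lra.
    + field. split; lra.
Qed.

Lemma run_end t : good t ->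
  iterR gaussA0 (na t) (1 - t) = 1 - gaussA (gaussA t) /\
  prodIter gaussA0 (na t) (1 - t) = t * gaussA t /\
  iterR gaussA0 (pred (na t)) (1 - t) = gaussA t / (1 + gaussA t) /\
  prodIter gaussA0 (pred (na t)) (1 - t) = t * (1 + gaussA t).
Proof.
  intros Ht. destruct (na_facts t Ht) as [Ha [Hb Hc]].
  pose proof (good_A t Ht) as [[Hs1 Hs2] _].
  destruct (run t Ht (pred (na t)) ltac:(lia)) as [E1 E2].
  assert (/ t - INR (pred (na t)) = 1 + gaussA t).
  { rewrite <- Hc. replace (na t) with (S (pred (na t))) at 2 by lia. rewrite S_INR. ring. }
  rewrite H in E1, E2.
  destruct Ht as [[H1 H2] _].
  assert (E1' : iterR gaussA0 (pred (na t)) (1 - t) = gaussA t / (1 + gaussA t))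
    by (rewrite E1; field; lra).
  assert (E2' : prodIter gaussA0 (pred (na t)) (1 - t) = t * (1 + gaussA t))
    by (rewrite E2; field; lra).
  replace (na t) with (S (pred (na t))) by lia. simpl.
  rewrite E1', E2'. repeat split; auto.
  - rewrite A0_eq. f_equal. unfold gaussA at 1.
    replace (/ (gaussA t / (1 + gaussA t))) with (/ gaussA t + IZR 1) by (simpl; field; lra).
    rewrite frac_plus. reflexivity.
  - field. lra.
Qed.

Definition Vb (t : R) : R := wsum gaussA0 lninv 1 (1 - t) (na t).
Definition eb (t : R) : R := Vb t - t * lninv (gaussA t).

Lemma run_sum t : good t -> forall m, (m < na t)%nat ->
  0 <= wsum gaussA0 lninv 1 (1 - t) m <= 2 * INR m * t.
Proof.
  intros Ht. destruct (na_facts t Ht) as [Ha [Hb Hc]].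
  pose proof (good_A t Ht) as [[Hs1 Hs2] _].
  induction m; intros Hm.
  - simpl. lra.
  - destruct (IHm ltac:(lia)) as [I1 I2].
    destruct (run t Ht m ltac:(lia)) as [E1 E2].
    assert (INR (S m) + 1 <= INR (na t)).
    { rewrite <- S_INR. apply le_INR. lia. }
    rewrite S_INR in *.
    destruct Ht as [[H1 H2] _].
    assert (2 < / t - INR m) by lra.
    set (d := / t - INR m) in *. clearbody d.
    change (wsum gaussA0 lninv 1 (1 - t) (S m)) with
      (wsum gaussA0 lninv 1 (1 - t) m + 1 ^ m * prodIter gaussA0 m (1 - t) * lninv (iterR gaussA0 m (1 - t))).
    rewrite E1, E2, pow1. change (lninv (1 - / d)) with (ln (/ (1 - / d))).
    replace (/ (1 - / d)) with (1 + / (d - 1)) by (field; split; lra).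
    assert (0 < / (d - 1)) by (apply Rinv_0_lt_compat; lra).
    assert (0 <= ln (1 + / (d - 1)) <= / (d - 1)).
    { split. apply ln_nonneg; lra. pose proof (ln_le_m1 (1 + / (d - 1))). lra. }
    assert (d / / t = d * t) by (field; lra). rewrite H5.
    assert (d * / (d - 1) <= 2).
    { apply (Rmult_le_reg_r (d - 1)); [lra|]. rewrite Rmult_assoc, Rinv_l; lra. }
    split.
    + assert (0 <= d * t * ln (1 + / (d - 1))) by (apply Rmult_le_pos; [apply Rmult_le_pos; lra|lra]). lra.
    + assert (d * t * ln (1 + / (d - 1)) <= d * t * / (d - 1)).
      { apply Rmult_le_compat_l; [apply Rmult_le_pos; lra|lra]. }
      assert (d * t * / (d - 1) <= 2 * t) by nra. lra.
Qed.

Lemma eb_formula t : good t ->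
  eb t = wsum gaussA0 lninv 1 (1 - t) (pred (na t))
         + t * (1 + gaussA t) * ln (1 + gaussA t) + t * gaussA t * ln (/ gaussA t).
Proof.
  intros Ht. destruct (na_facts t Ht) as [Ha [Hb Hc]].
  destruct (run_end t Ht) as [_ [_ [E1 E2]]].
  pose proof (good_A t Ht) as [[Hs1 Hs2] _].
  unfold eb, Vb. replace (na t) with (S (pred (na t))) at 1 by lia.
  simpl wsum. rewrite E1, E2, pow1. unfold lninv.
  replace (/ (gaussA t / (1 + gaussA t))) with ((1 + gaussA t) * / gaussA t) by (field; lra).
  rewrite ln_mult; [|lra|apply Rinv_0_lt_compat; lra]. ring.
Qed.

Lemma eb_bound t : good t -> Rabs (eb t) <= 5.
Proof.
  intros Ht. rewrite (eb_formula t Ht).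
  destruct (na_facts t Ht) as [Ha [Hb Hc]].
  destruct (run_sum t Ht (pred (na t)) ltac:(lia)) as [S1 S2].
  pose proof (good_A t Ht) as [[Hs1 Hs2] _].
  assert (INR (pred (na t)) * t <= 1).
  { destruct Ht as [[H1 H2] _].
    assert (INR (pred (na t)) <= / t).
    { apply Rle_trans with (INR (na t)). apply le_INR; lia.
      destruct (base_Int_part (/ t)). lra. }
    apply (Rmult_le_compat_r t) in H; [|lra]. rewrite Rinv_l in H; lra. }
  destruct Ht as [[H1 H2] _].
  assert (0 <= ln (1 + gaussA t) <= gaussA t).
  { split. apply ln_nonneg; lra. pose proof (ln_le_m1 (1 + gaussA t)). lra. }
  assert (1 < / gaussA t). { rewrite <- Rinv_1. apply Rinv_lt_contravar; lra. }
  assert (0 <= ln (/ gaussA t) <= / gaussA t - 1).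
  { split. apply ln_nonneg; lra. apply ln_le_m1; lra. }
  assert (0 <= t * (1 + gaussA t) * ln (1 + gaussA t) <= 2).
  { split. apply Rmult_le_pos; [nra|lra].
    apply Rle_trans with (t * (1 + gaussA t) * gaussA t). apply Rmult_le_compat_l; [nra|lra]. nra. }
  assert (0 <= t * gaussA t * ln (/ gaussA t) <= 1).
  { split. apply Rmult_le_pos; [nra|lra].
    apply Rle_trans with (t * gaussA t * (/ gaussA t - 1)). apply Rmult_le_compat_l; [nra|lra].
    replace (t * gaussA t * (/ gaussA t - 1)) with (t * (1 - gaussA t)) by (field; lra). nra. }
  rewrite Rabs_right; lra.
Qed.

Fixpoint Nb (k : nat) (t : R) : nat :=
  match k with O => O | S k' => (na t + Nb k' (gaussA (gaussA t)))%nat end.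

Definition Gb (t : R) (k : nat) : R := wsum gaussA0 lninv 1 (1 - t) (Nb k t).

Lemma Gb_S t k : good t ->
  Gb t (S k) = Vb t + t * gaussA t * Gb (gaussA (gaussA t)) k.
Proof.
  intros Ht. unfold Gb, Vb. simpl Nb. rewrite wsum_split.
  destruct (run_end t Ht) as [E1 [E2 _]]. rewrite E1, E2. reflexivity.
Qed.

Lemma Nb_ge k : forall t, good t -> (k <= Nb k t)%nat.
Proof.
  induction k; intros t Ht; simpl. lia.
  destruct (na_facts t Ht) as [Ha _].
  pose proof (IHk (gaussA (gaussA t)) (good_A _ (good_A _ Ht))). lia.
Qed.

Lemma Mid sg (Hsg : sg * sg = 1) : forall n y, good y ->
  lninv y + y * Gb (gaussA y) (n / 2) + sg * Gb y ((n + 1) / 2)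
  = wsum gaussA lninv sg y (S n) + sg * wsum gaussA eb sg y n.
Proof.
  induction n; intros y Hy.
  - simpl. unfold Gb. simpl. ring.
  - assert (E : ((S n + 1) / 2 = S (n / 2))%nat).
    { replace (S n + 1)%nat with (n + 1 * 2)%nat by lia. rewrite Nat.div_add by lia. lia. }
    assert (E' : (S n / 2 = (n + 1) / 2)%nat) by (f_equal; lia).
    rewrite E, E', Gb_S by auto.
    rewrite (wsum_shift _ _ _ y (S n)), (wsum_shift _ _ _ y n).
    pose proof (IHn (gaussA y) (good_A _ Hy)) as IH.
    assert (wsum gaussA lninv sg (gaussA y) (S n) =
      lninv (gaussA y) + gaussA y * Gb (gaussA (gaussA y)) (n / 2) + sg * Gb (gaussA y) ((n + 1) / 2)
      - sg * wsum gaussA eb sg (gaussA y) n) as -> by lra.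
    unfold eb.
    set (G1 := Gb (gaussA y) ((n + 1) / 2)).
    assert (y * G1 * (sg * sg) = y * G1) by (rewrite Hsg; ring).
    nra.
Qed.

Lemma wsum_bound g K sg : 0 <= K -> Rabs sg = 1 ->
  (forall z, good z -> Rabs (g z) <= K) ->
  forall n y, good y -> Rabs (wsum gaussA g sg y n) <= 4 * K.
Proof.
  intros HK Hs Hg.
  assert (forall n, (forall y, good y -> Rabs (wsum gaussA g sg y n) <= 4 * K) /\
                    (forall y, good y -> Rabs (wsum gaussA g sg y (S n)) <= 4 * K)).
  { induction n.
    - split; intros y Hy.
      + simpl. rewrite Rabs_R0. lra.
      + simpl. replace (0 + 1 * 1 * g y) with (g y) by ring. pose proof (Hg y Hy). lra.
    - destruct IHn as [I1 I2]. split; auto.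
      intros y Hy. rewrite !wsum_shift.
      pose proof (good_A _ Hy) as Hy1. pose proof (good_A _ Hy1) as Hy2.
      pose proof (I1 _ Hy2) as B2. pose proof (Hg _ Hy) as B0. pose proof (Hg _ Hy1) as B1.
      pose proof (good_mul_A _ Hy) as Hm.
      destruct Hy as [[H1 H2] _]. destruct Hy1 as [[H3 H4] _].
      set (w := wsum gaussA g sg (gaussA (gaussA y)) n) in *.
      set (a1 := gaussA y) in *.
      apply Rle_trans with (Rabs (g y) + y * (Rabs (g a1) + a1 * Rabs w)).
      + eapply Rle_trans; [apply Rabs_triang|].
        apply Rplus_le_compat_l. rewrite !Rabs_mult, Hs, (Rabs_right y) by lra.
        rewrite Rmult_1_l. apply Rmult_le_compat_l; [lra|].
        eapply Rle_trans; [apply Rabs_triang|].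
        apply Rplus_le_compat_l. rewrite !Rabs_mult, Hs, (Rabs_right a1) by lra. lra.
      + assert (y * Rabs (g a1) <= K) by nra.
        assert (y * (a1 * Rabs w) <= 2 * K).
        { rewrite <- Rmult_assoc. apply Rle_trans with (1/2 * (4 * K)).
          apply Rmult_le_compat; try lra. apply Rmult_le_pos; lra. apply Rabs_pos. lra. }
        lra. }
  intros n y Hy. apply (proj1 (H n)); auto.
Qed.

Lemma sum_n_R (u : nat -> R) n : sum_n u (S n) = sum_n u n + u (S n).
Proof. rewrite sum_Sn. reflexivity. Qed.

Lemma sum_mono (u : nat -> R) : (forall j, 0 <= u j) ->
  forall m k, sum_n u m <= sum_n u (m + k).
Proof.
  intros Hu m k. induction k.
  - rewrite Nat.add_0_r. lra.
  - rewrite Nat.add_succ_r, sum_n_R. pose proof (Hu (S (m + k))). lra.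
Qed.

Lemma sum_mono' (u : nat -> R) : (forall j, 0 <= u j) ->
  forall m m', (m <= m')%nat -> sum_n u m <= sum_n u m'.
Proof. intros Hu m m' H. replace m' with (m + (m' - m))%nat by lia. apply sum_mono; auto. Qed.

Lemma sum_nonneg (u : nat -> R) : (forall j, 0 <= u j) -> forall m, 0 <= sum_n u m.
Proof.
  intros Hu m. apply Rle_trans with (sum_n u 0). rewrite sum_O. auto.
  apply sum_mono'; auto; lia.
Qed.

Lemma series_lim (u : nat -> R) : ex_series u -> is_lim_seq (sum_n u) (Series u).
Proof. intros H. apply Series_correct in H. exact H. Qed.

Lemma le_series (u : nat -> R) : (forall j, 0 <= u j) -> ex_series u ->
  forall m, sum_n u m <= Series u.
Proof.
  intros Hu He m.
  assert (Rbar_le (sum_n u m) (Series u)).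
  { apply (is_lim_seq_le_loc (fun _ => sum_n u m) (sum_n u)).
    - exists m. intros n Hn. apply sum_mono'; auto.
    - apply is_lim_seq_const.
    - apply series_lim; auto. }
  exact H.
Qed.

Lemma bounded_series (u : nat -> R) M : (forall j, 0 <= u j) ->
  (forall m, sum_n u m <= M) -> ex_series u.
Proof.
  intros Hu HM.
  destruct (ex_finite_lim_seq_incr (sum_n u) M) as [l Hl]; auto.
  - intros n. rewrite sum_n_R. pose proof (Hu (S n)). lra.
  - exists l. exact Hl.
Qed.

Lemma lim_abs_bound (u : nat -> R) (l K : R) : is_lim_seq u l ->
  (forall n, Rabs (u n) <= K) -> Rabs l <= K.
Proof.
  intros Hl HK.
  assert (Rbar_le l K).
  { apply (is_lim_seq_le u (fun _ => K)); auto. intros n. pose proof (HK n).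
    pose proof (Rle_abs (u n)). lra. apply is_lim_seq_const. }
  assert (Rbar_le (- K) l).
  { apply (is_lim_seq_le (fun _ => - K) u); auto. intros n. pose proof (HK n).
    pose proof (Rabs_maj2 (u n)). lra. apply is_lim_seq_const. }
  simpl in H, H0. apply Rabs_le. lra.
Qed.

Lemma half_to_inf (phi : nat -> nat) : (forall n, (n / 2 <= phi n)%nat) ->
  filterlim phi eventually eventually.
Proof.
  intros H P [N HN]. exists (2 * N)%nat. intros n Hn. apply HN.
  eapply Nat.le_trans; [|apply H].
  replace N with ((2 * N) / 2)%nat at 1.
  - apply Nat.div_le_mono; lia.
  - rewrite Nat.mul_comm, Nat.div_mul; lia.
Qed.

Lemma sum_wsum T sg y n :
  sum_n (fun j => sg ^ j * brjuno_term T y j) n = wsum T lninv sg y (S n).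
Proof.
  induction n.
  - rewrite sum_O. simpl. unfold brjuno_term, lninv. simpl. ring.
  - rewrite sum_n_R, IHn. change (wsum T lninv sg y (S (S n))) with
      (wsum T lninv sg y (S n) + sg ^ (S n) * prodIter T (S n) y * lninv (iterR T (S n) y)).
    unfold brjuno_term, lninv. rewrite Rmult_assoc. reflexivity.
Qed.

Lemma iter_good T (HT : forall z, good z -> good (T z)) j y :
  good y -> good (iterR T j y).
Proof. intros H. induction j; simpl; auto. Qed.

Lemma prod_pos T (HT : forall z, good z -> good (T z)) j y :
  good y -> 0 < prodIter T j y.
Proof.
  intros H. induction j; simpl. lra.
  destruct (iter_good T HT j y H) as [[H1 _] _]. nra.
Qed.

Lemma term_nonneg T (HT : forall z, good z -> good (T z)) y j :
  good y -> 0 <= brjuno_term T y j.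
Proof.
  intros H. unfold brjuno_term. apply Rmult_le_pos.
  - apply Rlt_le, prod_pos; auto.
  - destruct (iter_good T HT j y H) as [[H1 H2] _]. apply ln_nonneg.
    rewrite <- Rinv_1. apply Rinv_le_contravar; lra.
Qed.

Lemma div2_S n : ((S n + 1) / 2 = S (n / 2))%nat.
Proof. replace (S n + 1)%nat with (n + 1 * 2)%nat by lia. rewrite Nat.div_add by lia. lia. Qed.

Lemma good_A_A0 : forall z, good z -> good (gaussA0 z).
Proof. exact good_A0. Qed.

Lemma key sg (Hsg : sg * sg = 1) y n : good y ->
  wsum gaussA0 lninv 1 y (S (Nb (S n / 2) (gaussA y)))
  + sg * wsum gaussA0 lninv 1 (1 - y) (S (pred (Nb ((S n + 1) / 2) y)))
  = wsum gaussA lninv sg y (S (S n)) + sg * wsum gaussA eb sg y (S n).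
Proof.
  intros Hy. rewrite <- (Mid sg Hsg (S n) y Hy).
  assert (1 <= Nb ((S n + 1) / 2) y)%nat.
  { pose proof (Nb_ge ((S n + 1) / 2) y Hy). rewrite div2_S in *. lia. }
  replace (S (pred (Nb ((S n + 1) / 2) y))) with (Nb ((S n + 1) / 2) y) by lia.
  rewrite wsum_shift, A0_eq. unfold Gb. ring.
Qed.

Lemma main_x x : irrational x ->
    ((B_finite x <-> (B0_finite x /\ B0_finite (- x))) /\
     (B_finite x -> Rabs (Bval x - 2 * B0plus x) <= 20)) /\
    (B0_finite x -> B0_finite (- x) ->
       W_converges x /\ Rabs (Wval x - 2 * B0minus x) <= 20).
Proof.
  intros Hx. pose proof (irrational_irr x Hx) as Hi.
  set (y := frac x).
  assert (Hy : good y) by (apply good_frac; auto).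
  assert (HB : forall n, sum_n (B_term x) n = wsum gaussA lninv 1 y (S n)).
  { intros n. rewrite <- sum_wsum. apply sum_n_ext. intros j. unfold B_term. rewrite pow1, Rmult_1_l. reflexivity. }
  assert (HW : forall n, sum_n (W_term x) n = wsum gaussA lninv (-1) y (S n)).
  { intros n. rewrite <- sum_wsum. reflexivity. }
  assert (H0 : forall n, sum_n (B0_term x) n = wsum gaussA0 lninv 1 y (S n)).
  { intros n. rewrite <- sum_wsum. apply sum_n_ext. intros j. unfold B0_term. rewrite pow1, Rmult_1_l. reflexivity. }
  assert (H1 : forall n, sum_n (B0_term (- x)) n = wsum gaussA0 lninv 1 (1 - y) (S n)).
  { intros n. rewrite <- sum_wsum. apply sum_n_ext. intros j. unfold B0_term.
    rewrite frac_opp by auto. rewrite pow1, Rmult_1_l. reflexivity. }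
  assert (nB : forall j, 0 <= B_term x j) by (intros; apply term_nonneg; auto; apply good_A).
  assert (n0 : forall j, 0 <= B0_term x j) by (intros; apply term_nonneg; auto; apply good_A0).
  assert (n1 : forall j, 0 <= B0_term (- x) j).
  { intros; unfold B0_term; rewrite frac_opp by auto; apply term_nonneg; auto.
    apply good_A0. apply good_1m; auto. }
  set (phi1 := fun n => Nb (S n / 2) (gaussA y)).
  set (phi2 := fun n => pred (Nb ((S n + 1) / 2) y)).
  assert (K : forall sg, sg * sg = 1 -> forall n,
    sum_n (B0_term x) (phi1 n) + sg * sum_n (B0_term (- x)) (phi2 n)
    = wsum gaussA lninv sg y (S (S n)) + sg * wsum gaussA eb sg y (S n)).
  { intros sg Hsg n. rewrite H0, H1. apply key; auto. }
  assert (Kp : forall n,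
    sum_n (B0_term x) (phi1 n) + sum_n (B0_term (- x)) (phi2 n)
    = sum_n (B_term x) (S n) + wsum gaussA eb 1 y (S n)).
  { intros n. rewrite HB. rewrite <- (Rmult_1_l (sum_n (B0_term (- x)) (phi2 n))).
    rewrite (K 1 ltac:(ring) n). ring. }
  assert (Km : forall n,
    sum_n (B0_term x) (phi1 n) - sum_n (B0_term (- x)) (phi2 n)
    = sum_n (W_term x) (S n) - wsum gaussA eb (-1) y (S n)).
  { intros n. rewrite HW.
    replace (sum_n (B0_term x) (phi1 n) - sum_n (B0_term (- x)) (phi2 n)) with
      (sum_n (B0_term x) (phi1 n) + (-1) * sum_n (B0_term (- x)) (phi2 n)) by ring.
    rewrite (K (-1) ltac:(ring) n). ring. }
  assert (Ep : forall n, Rabs (wsum gaussA eb 1 y n) <= 20).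
  { intros n. replace 20 with (4 * 5) by ring. apply wsum_bound; auto. lra.
    rewrite Rabs_R1; auto. apply eb_bound. }
  assert (Em : forall n, Rabs (wsum gaussA eb (-1) y n) <= 20).
  { intros n. replace 20 with (4 * 5) by ring. apply wsum_bound; auto. lra.
    rewrite Rabs_left by lra; lra. apply eb_bound. }
  assert (phi1_ge : forall n, (n / 2 <= phi1 n)%nat).
  { intros n. unfold phi1. eapply Nat.le_trans; [|apply Nb_ge; apply good_A; auto].
    apply Nat.div_le_mono; lia. }
  assert (phi2_ge : forall n, (n / 2 <= phi2 n)%nat).
  { intros n. unfold phi2. pose proof (Nb_ge ((S n + 1) / 2) y Hy). rewrite div2_S in *. lia. }
  assert (D1 : B0_finite x -> B0_finite (- x) -> B_finite x).
  { intros F0 F1. apply (bounded_series _ (B0val x + B0val (- x) + 20)); auto.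
    intros m. apply Rle_trans with (sum_n (B_term x) (S m)).
    { apply sum_mono'; auto. }
    pose proof (Kp m). pose proof (Ep (S m)). pose proof (Rle_abs (wsum gaussA eb 1 y (S m))).
    pose proof (Rabs_maj2 (wsum gaussA eb 1 y (S m))).
    pose proof (le_series _ n0 F0 (phi1 m)). pose proof (le_series _ n1 F1 (phi2 m)).
    unfold B0val. lra. }
  assert (D2 : B_finite x -> B0_finite x /\ B0_finite (- x)).
  { intros F. pose proof (le_series _ nB F) as LB.
    assert (forall n, sum_n (B0_term x) (phi1 n) + sum_n (B0_term (- x)) (phi2 n) <= Bval x + 20).
    { intros n. rewrite Kp. pose proof (LB (S n)). pose proof (Ep (S n)).
      pose proof (Rle_abs (wsum gaussA eb 1 y (S n))). unfold Bval. lra. }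
    split.
    - apply (bounded_series _ (Bval x + 20)); auto. intros m.
      apply Rle_trans with (sum_n (B0_term x) (phi1 (2 * m)%nat)).
      { apply sum_mono'; auto. pose proof (phi1_ge (2 * m)%nat) as P.
        assert (E : ((2 * m) / 2 = m)%nat) by (rewrite Nat.mul_comm, Nat.div_mul; lia).
        rewrite E in P. exact P. }
      pose proof (H (2 * m)%nat). pose proof (sum_nonneg _ n1 (phi2 (2 * m)%nat)). lra.
    - apply (bounded_series _ (Bval x + 20)); auto. intros m.
      apply Rle_trans with (sum_n (B0_term (- x)) (phi2 (2 * m)%nat)).
      { apply sum_mono'; auto. pose proof (phi2_ge (2 * m)%nat) as P.
        assert (E : ((2 * m) / 2 = m)%nat) by (rewrite Nat.mul_comm, Nat.div_mul; lia).
        rewrite E in P. exact P. }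
      pose proof (H (2 * m)%nat). pose proof (sum_nonneg _ n0 (phi1 (2 * m)%nat)). lra. }
  assert (L0 : B0_finite x -> is_lim_seq (fun n => sum_n (B0_term x) (phi1 n)) (B0val x)).
  { intros F. apply (is_lim_seq_subseq (sum_n (B0_term x)) (B0val x) phi1).
    apply half_to_inf; auto. apply series_lim; auto. }
  assert (L1 : B0_finite (- x) -> is_lim_seq (fun n => sum_n (B0_term (- x)) (phi2 n)) (B0val (- x))).
  { intros F. apply (is_lim_seq_subseq (sum_n (B0_term (- x))) (B0val (- x)) phi2).
    apply half_to_inf; auto. apply series_lim; auto. }
  split; [split; [split; auto; intros [F0 F1]; auto|]|].
  - intros F. destruct (D2 F) as [F0 F1].
    assert (LB : is_lim_seq (fun n => sum_n (B_term x) (S n)) (Bval x)).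
    { apply (is_lim_seq_subseq (sum_n (B_term x)) (Bval x) S).
      apply half_to_inf. intros n. apply Nat.le_trans with n. apply Nat.Div0.div_le_upper_bound; lia. lia.
      apply series_lim; auto. }
    pose proof (is_lim_seq_minus' _ _ _ _ LB (is_lim_seq_plus' _ _ _ _ (L0 F0) (L1 F1))) as L.
    replace (Bval x - 2 * B0plus x) with (Bval x - (B0val x + B0val (- x))) by (unfold B0plus; field).
    apply (lim_abs_bound _ _ 20 L). intros n. simpl.
    rewrite Kp. replace (sum_n (B_term x) (S n) - (sum_n (B_term x) (S n) + wsum gaussA eb 1 y (S n)))
      with (- wsum gaussA eb 1 y (S n)) by ring. rewrite Rabs_Ropp. auto.
  - intros F0 F1. pose proof (D1 F0 F1) as F.
    assert (FW : W_converges x).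
    { apply ex_series_Rabs. apply (ex_series_ext (B_term x)); auto.
      intros j. unfold W_term, B_term. rewrite Rabs_mult, pow_1_abs, Rmult_1_l.
      rewrite Rabs_right; auto. apply Rle_ge. apply nB. }
    split; auto.
    assert (LW : is_lim_seq (fun n => sum_n (W_term x) (S n)) (Wval x)).
    { apply (is_lim_seq_subseq (sum_n (W_term x)) (Wval x) S).
      apply half_to_inf. intros n. apply Nat.le_trans with n. apply Nat.Div0.div_le_upper_bound; lia. lia.
      apply series_lim; auto. }
    pose proof (is_lim_seq_minus' _ _ _ _ LW (is_lim_seq_minus' _ _ _ _ (L0 F0) (L1 F1))) as L.
    replace (Wval x - 2 * B0minus x) with (Wval x - (B0val x - B0val (- x))) by (unfold B0minus; field).
    apply (lim_abs_bound _ _ 20 L). intros n. simpl.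
    rewrite Km. replace (sum_n (W_term x) (S n) - (sum_n (W_term x) (S n) - wsum gaussA eb (-1) y (S n)))
      with (wsum gaussA eb (-1) y (S n)) by ring. auto.
Qed.

Theorem theorem1 :
  exists Cp Cm : R, 0 < Cp /\ 0 < Cm /\
  forall x : R, irrational x ->
    ((B_finite x <-> (B0_finite x /\ B0_finite (- x))) /\
     (B_finite x -> Rabs (Bval x - 2 * B0plus x) <= Cp)) /\
    (B0_finite x -> B0_finite (- x) ->
       W_converges x /\ Rabs (Wval x - 2 * B0minus x) <= Cm).
Proof.
  exists 20, 20. split; [lra|]. split; [lra|]. exact main_x.
Qed.
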